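(* Let $\beta\in(0,1]$, $m\ge0$ an integer, and $\theta=(k_r)$ a lacunary sequence. If $\liminf_r q_r>1$, then $S^\beta(F,\Delta^m)\subset S_\theta^\beta(F,\Delta^m)$.
   Context: A fuzzy number is a map $X:\mathbb{R}\to[0,1]$ which is normal, fuzzy convex, upper semicontinuous, with compact closure of $\{t:X(t)>0\}$; $L(\mathbb{R})$ is the set of fuzzy numbers. Level sets $[X]^\alpha=\{t:X(t)\ge\alpha\}$ ($\alpha\in(0,1]$), $[X]^0=\overline{\{t:X(t)>0\}}$, are compact intervals $[u^\alpha,v^\alpha]$. Subtraction: $[X-Y]^\alpha=[u_1^\alpha-v_2^\alpha,v_1^\alpha-u_2^\alpha]$. Metric: $d(X,Y)=\sup_{\alpha\in[0,1]}\max\{|u_1^\alpha-u_2^\alpha|,|v_1^\alpha-v_2^\alpha|\}$. $(\Delta^0X)_k=X_k$, $(\Delta^1X)_k=X_k-X_{k+1}$, $(\Delta^mX)_k=(\Delta^1(\Delta^{m-1}X))_k$. A lacunary sequence is an increasing integer sequence $\theta=(k_r)_{r\ge0}$ with $k_0=0$, $h_r=k_r-k_{r-1}\to\infty$; $I_r=(k_{r-1},k_r]$, $q_r=k_r/k_{r-1}$. $S_\theta^\beta(F,\Delta^m)$: sequences $X$ of fuzzy numbers with some $X_0\in L(\mathbb{R})$ such that for all $\varepsilon>0$, $\lim_r\frac{1}{h_r^\beta}|\{k\in I_r:d(\Delta^mX_k,X_0)\ge\varepsilon\}|=0$. $S^\beta(F,\Delta^m)$: sequences $X$ with some $X_0\in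 L(\mathbb{R})$ such that for all $\varepsilon>0$, $\lim_{n\to\infty}\frac{1}{n^\beta}|\{k\le n:d(\Delta^mX_k,X_0)\ge\varepsilon\}|=0$. *)

(* Defs.v *)
From HB Require Import structures.
From mathcomp Require Import all_boot all_order all_algebra.
From mathcomp Require Import all_classical all_reals all_analysis.
Set Implicit Arguments. Unset Strict Implicit. Unset Printing Implicit Defensive.
Import Order.TTheory GRing.Theory Num.Theory.
Import numFieldNormedType.Exports.
Local Open Scope classical_set_scope.
Local Open Scope ring_scope.

Section Fuzzy.
Variable R : realType.

(* A fuzzy number: normal, fuzzy convex, upper semicontinuous map R -> [0,1]
   whose support has compact closure. *)
Definition fuzzy_number (X : R -> R) : Prop :=
  [/\ (forall t, 0 <= X t <= 1),
      (exists t, X t = 1),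
      (forall s t l, 0 <= l <= 1 -> Num.min (X s) (X t) <= X (l * s + (1 - l) * t)),
      (forall a : R, open [set t | X t < a])
    & compact (closure [set t | 0 < X t])].

Definition levelset (X : R -> R) (a : R) : set R :=
  if a == 0 then closure [set t | 0 < X t] else [set t | a <= X t].

Definition lend (X : R -> R) (a : R) : R := inf (levelset X a).
Definition rend (X : R -> R) (a : R) : R := sup (levelset X a).

(* X - Y : the fuzzy number whose a-level set is
   [u1^a - v2^a, v1^a - u2^a]; its membership function is recovered from the
   level sets as t |-> sup ({0} U {a in (0,1] | t in [X-Y]^a}). *)
Definition fsub (X Y : R -> R) : R -> R := fun t =>
  sup ([set 0] `|` [set a | 0 < a <= 1 /\
         lend X a - rend Y a <= t <= rend X a - lend Y a]).

Definition fdist (X Y : R -> R) : R :=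
  sup [set x | exists2 a, 0 <= a <= 1 &
        x = Num.max `|lend X a - lend Y a| `|rend X a - rend Y a|].

Fixpoint Delta (m : nat) (X : nat -> R -> R) : nat -> R -> R :=
  match m with
  | 0 => X
  | m'.+1 => fun k => fsub (Delta m' X k) (Delta m' X k.+1)
  end.

End Fuzzy.

Definition lacunary (theta : nat -> nat) : Prop :=
  [/\ theta 0 = 0%N,
      (forall r, (theta r < theta r.+1)%N)
    & (forall M : nat, exists N : nat, forall r, (N <= r)%N -> (M <= theta r.+1 - theta r)%N)].

Definition hr (theta : nat -> nat) (r : nat) : nat := (theta r - theta r.-1)%N.

Definition qr (R : realType) (theta : nat -> nat) (r : nat) : R :=
  (theta r)%:R / (theta r.-1)%:R.

(* number of k in the integer interval (a, b] with P k *)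
Definition count_between (P : pred nat) (a b : nat) : nat :=
  count P (iota a.+1 (b - a)).

Definition S_theta (R : realType) (theta : nat -> nat) (beta : R) (m : nat)
  : set (nat -> R -> R) :=
  [set X | (forall k, fuzzy_number (X k)) /\
     exists X0 : R -> R, fuzzy_number X0 /\
       forall eps : R, 0 < eps ->
         (fun r : nat =>
            (count_between (fun k => eps <= fdist (Delta m X k) X0)
                           (theta r) (theta r.+1))%:R
            / ((hr theta r.+1)%:R `^ beta)) @ \oo --> (0 : R)].

Definition S_stat (R : realType) (beta : R) (m : nat) : set (nat -> R -> R) :=
  [set X | (forall k, fuzzy_number (X k)) /\
     exists X0 : R -> R, fuzzy_number X0 /\
       forall eps : R, 0 < eps ->
         (fun n : nat =>
            (count_between (fun k => eps <= fdist (Delta m X k) X0) 0 n)%:R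
            / (n%:R `^ beta)) @ \oo --> (0 : R)].

(* Main.v *)
Require Import Defs.
From HB Require Import structures.
From mathcomp Require Import all_boot all_order all_algebra.
From mathcomp Require Import all_classical all_reals all_analysis.
From mathcomp Require Import lra ring.
Import Order.TTheory GRing.Theory Num.Theory.
Import numFieldNormedType.Exports.
Local Open Scope classical_set_scope.
Local Open Scope ring_scope.
Lemma liminf_gt1 (R : realType) (u : nat -> R) :
  (1 < limn_einf (fun r => (u r)%:E))%E ->
  exists c : R, 1 < c /\ exists N, forall r, (N <= r)%N -> c <= u r.
Proof.
rewrite limn_einf_lim.
have /cvg_lim -> := @cvg_einfs_sup R (fun r => (u r)%:E) => //.
case/ereal_sup_gt => _ [n _ <-] H1.
have [c [c1 ce]] : exists c : R, 1 < c /\ (c%:E <= einfs (fun r => (u r)%:E) n)%E.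
  move: H1; case: (einfs _ n) => [x| |] //.
  - rewrite lte_fin => x1; exists ((1 + x) / 2); split; first lra.
    rewrite lee_fin; lra.
  - by move=> _; exists 2; split; [lra | rewrite leey].
exists c; split => //; exists n => r nr.
rewrite -lee_fin; apply: (le_trans ce).
by apply: ereal_inf_lbound; exists r.
Qed.

Lemma nearP (P : nat -> Prop) : (\forall n \near \oo, P n) <-> exists N, forall n, (N <= n)%N -> P n.
Proof.
split.
- by case=> N _ HN; exists N => n /HN.
- by case=> N HN; exists N => // n /HN.
Qed.

Lemma count_between_le (P : pred nat) a b : (a <= b)%N ->
  (count_between P a b <= count_between P 0 b)%N.
Proof.
move=> ab; rewrite /count_between subn0 -{2}(subnKC ab) iotaD count_cat add1n.
exact: leq_addl.
Qed.

Lemma theta_ge (theta : nat -> nat) : (forall r, (theta r < theta r.+1)%N) ->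
  forall r, (r <= theta r)%N.
Proof.
move=> H; elim=> // r IH; exact: leq_ltn_trans IH (H r).
Qed.

Theorem theorem2p9 (R : realType) (beta : R) (m : nat) (theta : nat -> nat) :
  0 < beta <= 1 ->
  lacunary theta ->
  (1 < limn_einf (fun r => (qr R theta r)%:E))%E ->
  S_stat beta m `<=` S_theta theta beta m.
Proof.
move=> /andP[b0 b1] [th0 thinc thh] /liminf_gt1 [c [c1 [N HN]]] X [Xf [X0 [X0f HX]]].
split => //; exists X0; split => // eps eps0.
have H := HX eps eps0.
set P := (fun k => eps <= fdist (Delta m X k) X0) in H *.
set f := (fun n : nat => _) in H.
set g := (fun r : nat => _).
have c0 : 0 < c by lra.
set K := (1 - c^-1) `^ beta.
have K0 : 0 < K.
  apply: powR_gt0; rewrite subr_gt0 invf_lt1 //.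
have f0 : forall n, 0 <= f n.
  by move=> n; rewrite /f divr_ge0 // powR_ge0.
have bound : forall r, (N <= r)%N -> 0 <= g r <= K^-1 * f (theta r.+1).
  move=> r Nr.
  have := HN r.+1 (leqW Nr); rewrite /qr /=.
  set a := (theta r)%:R; set b := (theta r.+1)%:R.
  move=> cab.
  have a0 : 0 < a.
    rewrite /a ltr0n lt0n; apply/negP => /eqP a0.
    by move: cab; rewrite /a a0 invr0 mulr0; lra.
  have ca : c * a <= b by rewrite -ler_pdivlMr // mulrC.
  have b0' : 0 < b by nra.
  rewrite /g /hr /= natrB ?(ltnW (thinc r)) // -/a -/b.
  have hb : (1 - c^-1) * b <= b - a.
    have : a <= b / c by rewrite ler_pdivlMr // mulrC.
    by rewrite mulrBl mul1r mulrC; lra.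
  have hpos : 0 < b - a by have := thinc r; rewrite -(ltr_nat R) -/a -/b; lra.
  have bb : 0 < b `^ beta by apply: powR_gt0.
  have hh : K * b `^ beta <= (b - a) `^ beta.
    rewrite /K -powRM; last by lra.
      apply: ge0_ler_powR; rewrite ?nnegrE //; try lra.
      apply: mulr_ge0; last by lra.
      rewrite subr_ge0 invf_le1 //; lra.
    rewrite subr_ge0 invf_le1 //; lra.
  apply/andP; split.
    by rewrite divr_ge0 // powR_ge0.
  rewrite /f -/b.
  apply: (@le_trans _ _ ((count_between P 0 (theta r.+1))%:R / ((b - a) `^ beta))).
    rewrite ler_wpM2r ?invr_ge0 ?powR_ge0 // ler_nat.
    exact: count_between_le (ltnW (thinc r)).
  apply: (@le_trans _ _ ((count_between P 0 (theta r.+1))%:R / (K * b `^ beta))).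
    rewrite ler_wpM2l // lef_pV2 ?posrE //; last exact: mulr_gt0.
    by apply: (lt_le_trans _ hh); apply: mulr_gt0.
  by rewrite invfM mulrCA.
apply/cvgrPdist_le => e e0.
have /cvgrPdist_le /(_ (e * K)) := H.
case/(_ (mulr_gt0 e0 K0))/nearP => M HM.
apply/nearP; exists (maxn N M) => r.
rewrite geq_max => /andP[Nr Mr].
have /andP[g0 gle] := bound r Nr.
have := HM (theta r.+1) (leq_trans Mr (leq_trans (leqnSn r) (@theta_ge theta thinc r.+1))).
rewrite sub0r normrN ger0_norm // => fle.
rewrite sub0r normrN ger0_norm //.
apply: (le_trans gle).
rewrite ler_pdivrMl //; by rewrite mulrC.
Qed.
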